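(* Let $n\ge 2k+1$ and let $S$ be a vertex cut of $K(n,k)$ achieving the toughness of $K(n,k)$, i.e. $\frac{|S|}{c(K(n,k)\setminus S)}=t(K(n,k))$. Then every connected component of $K(n,k)\setminus S$ is either a single vertex, a copy of $K_2$, or is biconnected (2-connected).
   Context: The Kneser graph $K(n,k)$ has as vertices the $k$-element subsets of $[n]=\{1,\dots,n\}$, two vertices being adjacent iff they are disjoint. A vertex cut is a set $S$ of vertices whose removal disconnects the graph; $c(G\setminus S)$ is the number of connected components after deleting $S$; the toughness is $t(G)=\min_S |S|/c(G\setminus S)$ over vertex cuts $S$. *)

(* Defs.v *)
From mathcomp Require Import all_boot all_order all_algebra.
Set Implicit Arguments. Unset Strict Implicit. Unset Printing Implicit Defensive.
Import Order.TTheory GRing.Theory Num.Theory.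

Section Graphs.
Variables (T : finType) (e : rel T).

Definition induced_rel (C : {set T}) : rel T :=
  fun x y => [&& x \in C, y \in C & e x y].

Definition connected_in (C : {set T}) : Prop :=
  forall x y, x \in C -> y \in C -> connect (induced_rel C) x y.

Definition components (S : {set T}) : {set {set T}} :=
  [set [set y in ~: S | connect (induced_rel (~: S)) x y] | x in ~: S].

Definition ncomp (S : {set T}) : nat := #|components S|.

Definition vertex_cut (S : {set T}) : bool := 1 < ncomp S.

Definition attains_toughness (S : {set T}) : Prop :=
  vertex_cut S /\
  forall S' : {set T}, vertex_cut S' ->
    ((#|S|%:R / (ncomp S)%:R : rat) <= #|S'|%:R / (ncomp S')%:R)%R.

Definition biconnected (C : {set T}) : Prop :=
  2 < #|C| /\ forall v, v \in C -> connected_in (C :\ v).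

End Graphs.

Definition kneser_vertex (n k : nat) := {A : {set 'I_n} | #|A| == k}.

Definition kneser_adj (n k : nat) : rel (kneser_vertex n k) :=
  fun A B => [disjoint val A & val B].

(* Main.v *)
Require Import Defs.
From mathcomp Require Import all_boot all_order all_algebra.
From mathcomp Require Import zify.
Set Implicit Arguments. Unset Strict Implicit. Unset Printing Implicit Defensive.

Section Gen.
Variables (T : finType) (e : rel T).
Hypothesis esym : symmetric e.

Definition nb (X : {set T}) := [set y | [exists x in X, e x y]].
Definition bd X := nb X :\: X.
Definition ncl X := X :|: nb X.
Definition cmp X := ~: ncl X.
Definition cand X := (X != set0) && (ncl X != setT).

Lemma nbP (X : {set T}) y : reflect (exists2 x, x \in X & e x y) (y \in nb X).
Proof. rewrite inE; apply: (iffP existsP) => [[x /andP[]]|[x ? ?]]; [by exists x|by exists x; apply/andP]. Qed.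

Lemma bdP (X : {set T}) z : reflect (z \notin X /\ exists2 x, x \in X & e x z) (z \in bd X).
Proof. rewrite inE; apply: (iffP andP) => [[? /nbP]|[? /nbP]]; by split. Qed.

Lemma ncl_bd (X : {set T}) : ncl X = X :|: bd X.
Proof. by apply/setP => z; rewrite !inE; case: (z \in X). Qed.

Lemma nclP (X : {set T}) z : reflect (z \in X \/ exists2 x, x \in X & e x z) (z \in ncl X).
Proof. rewrite inE; apply: (iffP orP) => [[->|/nbP]|[->|/nbP]]; by auto. Qed.

Lemma ncl_mono (X Y : {set T}) : X \subset Y -> ncl X \subset ncl Y.
Proof.
move=> /subsetP sXY; apply/subsetP => z /nclP [/sXY zY|[x /sXY xY exz]]; apply/nclP; [left|right] => //.
by exists x.
Qed.

Lemma sub_ncl (X : {set T}) : X \subset ncl X.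
Proof. by apply/subsetP => z zX; rewrite inE zX. Qed.

Lemma cmpP (X : {set T}) z : (z \in cmp X) = (z \notin ncl X).
Proof. by rewrite inE. Qed.

Lemma card_part (X Z : {set T}) : #|Z| = #|Z :&: X| + #|Z :&: bd X| + #|Z :&: cmp X|.
Proof.
have h1 : #|Z| = #|Z :&: ncl X| + #|Z :&: cmp X|.
  by rewrite /cmp -(cardsID (ncl X) Z) setDE.
have h2 : #|Z :&: ncl X| = #|Z :&: X| + #|Z :&: bd X|.
  rewrite ncl_bd setIUr cardsU.
  have -> : Z :&: X :&: (Z :&: bd X) = set0.
    apply/setP => z; rewrite !inE; by case: (z \in X); rewrite ?andbF.
  by rewrite cards0 subn0.
lia.
Qed.

Lemma bd_cmp (X : {set T}) : bd (cmp X) \subset bd X.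
Proof.
apply/subsetP => z /bdP [zn [x xc exz]].
move: zn xc; rewrite !cmpP negbK => /nclP [zX|[w wX ewz]] xn.
- case/negP: xn; apply/nclP; right; exists z => //; by rewrite esym.
- apply/bdP; split; last by exists w.
  apply/negP => zX.
  case/negP: xn; apply/nclP; right; exists z => //; by rewrite esym.
Qed.

Lemma ncl_cmp (X : {set T}) : ncl (cmp X) \subset ~: X.
Proof.
apply/subsetP => z /nclP [zc|[x xc exz]]; rewrite inE.
- move: zc; rewrite cmpP; apply: contra => zX; by apply/nclP; left.
- apply/negP => zX; move: xc; rewrite cmpP => /negP; apply; apply/nclP; right.
  by exists z => //; rewrite esym.
Qed.

Lemma cand_sub (X Y : {set T}) : cand X -> Y != set0 -> Y \subset X -> cand Y.
Proof.
move=> /andP[_ nX] nY sYX; rewrite /cand nY /=.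
apply: contra nX => /eqP nT; rewrite eqEsubset subsetT /= -nT; exact: ncl_mono.
Qed.

Lemma cand_subc (X Y : {set T}) : X != set0 -> Y != set0 -> Y \subset cmp X -> cand Y.
Proof.
move=> nX nY sYX; rewrite /cand nY /=.
apply/negP => /eqP nT.
have : ncl Y \subset ~: X.
  apply: subset_trans (ncl_mono sYX) _; exact: ncl_cmp.
rewrite nT => /subsetP h.
case/set0Pn: nX => x xX; have := h x; rewrite !inE xX; by move/(_ isT).
Qed.

Lemma cand_cmp (X : {set T}) : cand X -> cand (cmp X).
Proof.
move=> cX; have /andP[nX nT] := cX; apply: cand_subc nX _ _ => //.
apply/set0Pn; case: (pickP (mem (~: ncl X))) => [z zz|h].
  by exists z; rewrite cmpP -in_setC.
exfalso.
move: nT => /negP; case; apply/eqP/setP => z; have := h z; rewrite !inE /=.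
by case: (_ || _).
Qed.

Lemma bdI (X Y : {set T}) : #|bd (X :&: Y)| <= #|bd X :&: Y| + #|bd X :&: bd Y| + #|X :&: bd Y|.
Proof.
have sub : bd (X :&: Y) \subset (bd X :&: Y) :|: (bd X :&: bd Y) :|: (X :&: bd Y).
  apply/subsetP => z /bdP [zn [x /setIP [xX xY] exz]].
  have zbX : z \notin X -> z \in bd X by move=> zX; apply/bdP; split => //; exists x.
  have zbY : z \notin Y -> z \in bd Y by move=> zY; apply/bdP; split => //; exists x.
  move: zn; rewrite !in_setU !in_setI.
  case: (boolP (z \in X)) => zX; case: (boolP (z \in Y)) => zY //= _.
  - by rewrite (zbY zY) orbT.
  - by rewrite (zbX zX).
  - by rewrite (zbX zX) (zbY zY) orbT.
apply: leq_trans (subset_leq_card sub) _.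
rewrite cardsU; apply: leq_trans (leq_subr _ _) _.
rewrite cardsU; rewrite leq_add2r; exact: leq_subr.
Qed.


Lemma cand_nonempty (X : {set T}) : cand X -> X != set0.
Proof. by case/andP. Qed.

Lemma cmpI0 (X : {set T}) : X :&: cmp X = set0.
Proof.
apply/setP => z; rewrite in_setI cmpP in_set0; case: (boolP (z \in X)) => //= zX.
by rewrite (subsetP (sub_ncl X) z zX).
Qed.

Lemma atom_sub (kap : nat) (A F : {set T}) :
  (forall X, cand X -> kap <= #|bd X|) ->
  cand A -> #|bd A| <= kap ->
  (forall X, cand X -> #|bd X| <= kap -> #|A| <= #|X|) ->
  cand F -> #|bd F| <= kap -> A :&: F != set0 -> A \subset F.
Proof.
move=> hk cA bA minA cF bF nAF.
have nA := cand_nonempty cA.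
have cAc := cand_cmp cA; have cFc := cand_cmp cF.
have bAc : #|bd (cmp A)| <= #|bd A| by apply: subset_leq_card; apply: bd_cmp.
have bFc : #|bd (cmp F)| <= #|bd F| by apply: subset_leq_card; apply: bd_cmp.
have hA := hk _ cA.
have mAc : #|A| <= #|cmp A| by apply: minA => //; lia.
have mFc : #|A| <= #|cmp F| by apply: minA => //; lia.
have pSA := card_part F (bd A).
have pSF := card_part A (bd F).
have a := bdI A F.
have a' := bdI A (cmp F).
have b := bdI (cmp A) (cmp F).
have b' := bdI (cmp A) F.
have m1 : #|bd (cmp A) :&: cmp F| <= #|bd A :&: cmp F| by apply/subset_leq_card/setSI/bd_cmp.
have m2 : #|bd (cmp A) :&: bd (cmp F)| <= #|bd A :&: bd F|.
  by apply/subset_leq_card/setISS; apply/bd_cmp.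
have m3 : #|cmp A :&: bd (cmp F)| <= #|cmp A :&: bd F| by apply/subset_leq_card/setIS/bd_cmp.
have m4 : #|bd (cmp A) :&: F| <= #|bd A :&: F| by apply/subset_leq_card/setSI/bd_cmp.
have m5 : #|bd (cmp A) :&: bd F| <= #|bd A :&: bd F| by apply/subset_leq_card/setSI/bd_cmp.
have m6 : #|bd A :&: bd (cmp F)| <= #|bd A :&: bd F| by apply/subset_leq_card/setIS/bd_cmp.
have m7 : #|A :&: bd (cmp F)| <= #|A :&: bd F| by apply/subset_leq_card/setIS/bd_cmp.
have e1 : #|bd F :&: A| = #|A :&: bd F| by rewrite setIC.
have e2 : #|bd F :&: bd A| = #|bd A :&: bd F| by rewrite setIC.
have e3 : #|bd F :&: cmp A| = #|cmp A :&: bd F| by rewrite setIC.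
have lAS : #|A :&: bd F| <= #|A| by apply/subset_leq_card/subsetIl.
suff hAF : #|bd (A :&: F)| <= kap.
  have cAF : cand (A :&: F) by apply: cand_sub cA nAF (subsetIl _ _).
  have := minA _ cAF hAF => le.
  apply/setIidPl/eqP; rewrite eqEcard subsetIl le //.
case: (boolP (cmp A :&: cmp F == set0)) => [/eqP AcFc|nAcFc]; last first.
  have := hk _ (cand_subc nA nAcFc (subsetIl _ _)); lia.
case: (boolP (A :&: cmp F == set0)) => [/eqP AFc|nAFc].
  have pFc := card_part A (cmp F).
  rewrite setIC AFc cards0 [cmp F :&: cmp A]setIC AcFc cards0 setIC in pFc.
  lia.
case: (boolP (cmp A :&: F == set0)) => [/eqP AcF|nAcF]; last first.
  have h1 := hk _ (cand_subc nA nAcF (subsetIl _ _)).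
  have cAFc : cand (A :&: cmp F) by apply: cand_sub cA nAFc (subsetIl _ _).
  have := minA _ cAFc; rewrite -/(cmp F).
  move=> /(_ ltac:(lia)) le.
  have sub : A \subset cmp F.
    apply/setIidPl/eqP; rewrite eqEcard subsetIl le //.
  case/set0Pn: nAF => z /setIP [zA zF].
  have := subsetP sub z zA; rewrite cmpP (subsetP (sub_ncl F) z zF) //.
have pAc := card_part F (cmp A).
rewrite AcF cards0 AcFc cards0 in pAc.
have := hk _ (cand_sub cA nAFc (subsetIl _ _)).
lia.
Qed.

Definition N x := [set y | e x y].

Lemma bd1 x : irreflexive e -> bd [set x] = N x.
Proof.
move=> eirr; apply/setP => z; rewrite [z \in N x]inE; apply/bdP/idP => [[_ [w]]|exz].
  by rewrite inE => /eqP ->.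
split; last by exists x; rewrite ?inE.
by rewrite inE; apply: contraTneq exz => ->; rewrite eirr.
Qed.

Section Auto.
Variable phi : T -> T.
Hypothesis phi_inj : injective phi.
Hypothesis phi_hom : forall a b, e (phi a) (phi b) = e a b.

Let phi_bij := injF_bij phi_inj.

Lemma phi_surj w : exists v, w = phi v.
Proof. case: phi_bij => g _ gK; by exists (g w); rewrite gK. Qed.

Lemma im_mem (Y : {set T}) v : (phi v \in phi @: Y) = (v \in Y).
Proof. exact: mem_imset. Qed.

Lemma nb_im (X : {set T}) : nb (phi @: X) = phi @: nb X.
Proof.
apply/setP => w; have [v ->] := phi_surj w; rewrite im_mem.
apply/nbP/nbP => [[u]|[u uX evu]].
  have [u' ->] := phi_surj u; rewrite im_mem phi_hom => ??; by exists u'.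
by exists (phi u); rewrite ?im_mem ?phi_hom.
Qed.

Lemma bd_im (X : {set T}) : bd (phi @: X) = phi @: bd X.
Proof.
apply/setP => w; have [v ->] := phi_surj w.
by rewrite im_mem /bd in_setD nb_im !im_mem in_setD.
Qed.

Lemma ncl_im (X : {set T}) : ncl (phi @: X) = phi @: ncl X.
Proof. by rewrite /ncl nb_im imsetU. Qed.

Lemma cand_im (X : {set T}) : cand (phi @: X) = cand X.
Proof.
rewrite /cand imset_eq0 ncl_im; congr (_ && _).
apply/negb_inj; rewrite !negbK; apply/eqP/eqP => [h|->].
  apply/eqP; rewrite eqEcard subsetT cardsT -(card_imset _ phi_inj) h cardsT //=.
apply/eqP; rewrite eqEcard subsetT cardsT (card_imset _ phi_inj) cardsT //=.
Qed.

End Auto.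

Theorem kappa :
  irreflexive e ->
  (forall x y u z, e x y -> e u z -> exists phi : T -> T,
      [/\ injective phi, (forall a b, e (phi a) (phi b) = e a b), phi x = u & phi y = z]) ->
  (forall X, cand X -> bd X != set0) ->
  forall X x, cand X -> #|N x| <= #|bd X|.
Proof.
move=> eirr arc conn X0 x0 cX0.
case: (arg_minnP (fun X => #|bd X|) cX0) => X1 cX1 minX1.
set kap := #|bd X1|.
have hk : forall X, cand X -> kap <= #|bd X| by move=> X /minX1.
have PX1 : cand X1 && (#|bd X1| <= kap) by rewrite cX1 leqnn.
case: (@arg_minnP _ X1 (fun X => cand X && (#|bd X| <= kap)) (fun X : {set T} => #|X|) PX1) => A /andP[cA bA] minA'.
have minA : forall X, cand X -> #|bd X| <= kap -> #|A| <= #|X|.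
  by move=> X cX bX; apply: minA'; rewrite cX bX.
have nA := cand_nonempty cA.
case/set0Pn: (nA) => x xA.
have Ax : A = [set x].
  case: (boolP [exists y in A, e x y]) => [/existsP [y /andP [yA exy]]|noy].
    case/set0Pn: (conn _ cA) => z /bdP [zA [u uA euz]].
    have [phi [pinj phom px py]] := arc _ _ _ _ exy euz.
    have cF : cand (phi @: A) by rewrite cand_im.
    have bF : #|bd (phi @: A)| <= kap by rewrite bd_im // card_imset.
    have nAF : A :&: (phi @: A) != set0.
      by apply/set0Pn; exists u; rewrite inE uA -px im_mem.
    have sub := atom_sub hk cA bA minA cF bF nAF.
    have eqF : A = phi @: A.
      by apply/eqP; rewrite eqEcard sub (card_imset _ pinj) leqnn.
    by move: zA; rewrite {1}eqF -py (mem_imset _ _ pinj) yA.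
  have sb : bd [set x] \subset bd A.
    apply/subsetP => z; rewrite bd1 // inE => exz.
    apply/bdP; split; last by exists x.
    apply: contra noy => zA; apply/existsP; exists z; by rewrite zA.
  have c1 : cand [set x].
    apply: cand_sub cA _ _; first by apply/set0Pn; exists x; rewrite inE.
    by rewrite sub1set.
  have := minA _ c1 (leq_trans (subset_leq_card sb) bA); rewrite cards1 => le1.
  apply/eqP; rewrite eq_sym eqEcard sub1set xA cards1 le1 //.
have kx : #|N x| <= kap by rewrite -bd1 // -Ax.
apply: leq_trans (hk _ cX0); apply: leq_trans kx.
case/set0Pn: (conn _ cA) => b; rewrite Ax bd1 // inE => exb.
case: (boolP (N x0 == set0)) => [/eqP ->|/set0Pn [y0]]; first by rewrite cards0.
rewrite inE => exy0.
have [phi [pinj phom px py]] := arc _ _ _ _ exy0 exb.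
rewrite -(card_imset _ pinj); apply: subset_leq_card; apply/subsetP => w /imsetP [v].
by rewrite !inE => ev ->; rewrite -px phom.
Qed.

End Gen.

Lemma card_sum_in (T : finType) (A B : {set T}) : A \subset B -> #|A| = \sum_(u in B) (u \in A).
Proof.
move=> sAB; rewrite -sum1_card big_mkcond [RHS]big_mkcond; apply: eq_bigr => u _.
case: (boolP (u \in A)) => uA; first by rewrite (subsetP sAB u uA).
by case: (u \in B).
Qed.

Section Comp.
Variables (T : finType) (e : rel T).
Hypothesis esym : symmetric e.

Definition comp (S : {set T}) x := [set y in ~: S | connect (induced_rel e (~: S)) x y].

Lemma componentsE (S : {set T}) : components e S = [set comp S x | x in ~: S].
Proof. by []. Qed.

Lemma ind_sym (A : {set T}) : symmetric (induced_rel e A).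
Proof. by move=> x y; rewrite /induced_rel esym; case: (x \in A); case: (y \in A). Qed.

Lemma ind_csym (A : {set T}) : connect_sym (induced_rel e A).
Proof. apply: sym_connect_sym; exact: ind_sym. Qed.

Lemma comp_mem (S : {set T}) x : x \notin S -> x \in comp S x.
Proof. by move=> xS; rewrite inE in_setC xS connect0. Qed.

Lemma comp_sub (S : {set T}) x y : y \in comp S x -> y \notin S.
Proof. by rewrite inE in_setC => /andP[]. Qed.

Lemma comp_conn (S : {set T}) x y : y \in comp S x -> connect (induced_rel e (~: S)) x y.
Proof. by rewrite inE => /andP[]. Qed.

Lemma comp_eq (S : {set T}) x y : y \in comp S x -> comp S y = comp S x.
Proof.
move=> yC; have cxy := comp_conn yC; apply/setP => z; rewrite !inE.
case: (z \notin S) => //=; apply/idP/idP => h.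
  exact: connect_trans cxy h.
by rewrite ind_csym in cxy; exact: connect_trans cxy h.
Qed.

Lemma comp_closed (S : {set T}) x a b : a \in comp S x -> b \notin S -> e a b -> b \in comp S x.
Proof.
move=> aC bS eab; rewrite inE in_setC bS /=.
apply: connect_trans (comp_conn aC) (connect1 _).
by rewrite /induced_rel !in_setC bS (comp_sub aC) eab.
Qed.

Lemma comp_mono (S S' : {set T}) x : S \subset S' -> comp S' x \subset comp S x.
Proof.
move=> sS; apply/subsetP => y; rewrite !inE => /andP [yS c]; apply/andP; split.
  by apply: contra yS; apply: (subsetP sS).
apply: connect_sub c => a b; rewrite /induced_rel !in_setC => /and3P [aS bS eab].
apply: connect1; rewrite !in_setC eab andbT; apply/andP; split.
  by apply: contra aS; apply: (subsetP sS).
by apply: contra bS; apply: (subsetP sS).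
Qed.

Lemma compsP (S : {set T}) C : reflect (exists2 x, x \notin S & C = comp S x) (C \in components e S).
Proof.
rewrite componentsE; apply: (iffP imsetP) => [[x]|[x]]; rewrite ?in_setC => xS ->; by exists x; rewrite ?in_setC.
Qed.

Lemma comps_n0 (S : {set T}) C : C \in components e S -> C != set0.
Proof. by case/compsP => x xS ->; apply/set0Pn; exists x; apply: comp_mem. Qed.

Lemma comps_eq (S : {set T}) C z : C \in components e S -> z \in C -> C = comp S z.
Proof. by case/compsP => x xS -> zC; rewrite (comp_eq zC). Qed.

Lemma comps_disj (S : {set T}) C D z : C \in components e S -> D \in components e S -> z \in C -> z \in D -> C = D.
Proof. by move=> cC cD zC zD; rewrite (comps_eq cC zC) (comps_eq cD zD). Qed.

Lemma comps_sub (S : {set T}) C z : C \in components e S -> z \in C -> z \notin S.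
Proof. by case/compsP => x xS -> /comp_sub. Qed.

Lemma comps_closed (S : {set T}) C a b : C \in components e S -> a \in C -> b \notin S -> e a b -> b \in C.
Proof. by case/compsP => x xS -> ; apply: comp_closed. Qed.

Lemma bd_comp_sub (S : {set T}) C : C \in components e S -> bd e C \subset S.
Proof.
move=> cC; apply/subsetP => z /bdP [zC [a aC eaz]].
apply/negPn; apply: contra zC => zS; exact: comps_closed cC aC zS eaz.
Qed.

Lemma comp_cand (S : {set T}) C : C \in components e S -> 1 < ncomp e S -> cand e C.
Proof.
move=> cC /card_gt1P [D1 [D2 [d1 d2 ne]]].
have [D cD neD] : exists2 D, D \in components e S & D != C.
  case: (eqVneq D1 C) => [e1|]; last by exists D1.
  by exists D2 => //; rewrite -e1 eq_sym.
rewrite /cand (comps_n0 cC) /=.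
case/set0Pn: (comps_n0 cD) => z zD.
apply/negP => /eqP full.
have : z \in ncl e C by rewrite full inE.
case/nclP => [zC|[a aC eaz]].
  by move: neD; rewrite (comps_disj cD cC zD zC) eqxx.
by move: neD; rewrite (comps_disj cD cC zD (comps_closed cC aC (comps_sub cD zD) eaz)) eqxx.
Qed.

Definition p S u := #|[set C in components e S | u \in bd e C]|.

Lemma sum_bd (S : {set T}) : \sum_(C in components e S) #|bd e C| = \sum_(u in S) p S u.
Proof.
rewrite (eq_bigr (fun C => \sum_(u in S) (u \in bd e C))); last first.
  by move=> C cC; apply: card_sum_in; apply: bd_comp_sub.
rewrite exchange_big /=; apply: eq_bigr => u _.
rewrite /p -sum1_card big_mkcond [RHS]big_mkcond /=; apply: eq_bigr => C _.
have -> : (C \in [set C0 in components e S | u \in bd e C0]) = (C \in components e S) && (u \in bd e C) by rewrite !inE.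
by case: (C \in components e S); case: (u \in bd e C).
Qed.

Lemma p_le (S : {set T}) u : p S u <= #|N e u|.
Proof.
rewrite /p; apply: leq_trans (leq_imset_card (comp S) (N e u)).
apply: subset_leq_card; apply/subsetP => C; rewrite inE => /andP [cC /bdP [uC [w wC ewu]]].
apply/imsetP; exists w; first by rewrite inE esym.
exact: comps_eq cC wC.
Qed.

Lemma T1 d (S : {set T}) : (forall X, cand e X -> d <= #|bd e X|) -> 1 < ncomp e S ->
  d * ncomp e S <= \sum_(u in S) p S u.
Proof.
move=> hd h1; rewrite -sum_bd /ncomp mulnC -sum_nat_const; apply: leq_sum => C cC.
apply: hd; exact: (comp_cand cC h1).
Qed.

Lemma T2 d (S : {set T}) : (forall u, #|N e u| <= d) -> \sum_(u in S) p S u <= #|S| * d.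
Proof.
move=> hN; rewrite -sum_nat_const; apply: leq_sum => u _; apply: leq_trans (p_le _ _) (hN u).
Qed.

End Comp.

Section Bij.
Variable T : finType.

Lemma seq3_props (A B : {set T}) : [disjoint A & B] ->
  let s := enum A ++ enum B ++ enum (~: (A :|: B)) in
  [/\ uniq s, forall i, i \in s & size s = #|T| ].
Proof.
move=> dAB s; split.
- rewrite /s !cat_uniq !enum_uniq /= andbT; apply/andP; split.
    apply/hasPn => z; rewrite mem_cat !mem_enum !inE => /orP [zB|].
      by apply: contraTN zB => zA; rewrite (disjointFr dAB zA).
    by rewrite negb_or => /andP [].
  by apply/hasPn => z; rewrite !mem_enum !inE negb_or => /andP [].
- by move=> i; rewrite !mem_cat !mem_enum !inE; case: (i \in A); case: (i \in B).
- rewrite /s !size_cat -!cardE.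
  have := cardsC (A :|: B); rewrite cardsU.
  have -> : A :&: B = set0 by apply/eqP; rewrite setI_eq0.
  rewrite cards0 subn0; lia.
Qed.

Lemma bij3 (A B C D : {set T}) : #|A| = #|C| -> #|B| = #|D| -> [disjoint A & B] -> [disjoint C & D] ->
  exists f : T -> T, [/\ injective f, f @: A = C & f @: B = D].
Proof.
move=> hAC hBD dAB dCD.
have [uA mA sA] := seq3_props dAB.
have [uC mC sC] := seq3_props dCD.
set lA := enum A ++ enum B ++ enum (~: (A :|: B)) in uA mA sA.
set lC := enum C ++ enum D ++ enum (~: (C :|: D)) in uC mC sC.
pose f i := nth i lC (index i lA).
have eqs : size lC = size lA by rewrite sA sC.
have ilt i : index i lA < size lC by rewrite eqs index_mem.
have finj : injective f.
  move=> i j; rewrite /f => h.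
  have h2 : nth i lC (index i lA) = nth i lC (index j lA).
    by rewrite h; apply: set_nth_default.
  move/eqP: h2; rewrite nth_uniq // => /eqP hij.
  by rewrite -(nth_index i (mA i)) hij (set_nth_default j) ?nth_index // -eqs.
have fA : f @: A \subset C.
  apply/subsetP => _ /imsetP [i iA ->].
  have iA' : i \in enum A by rewrite mem_enum.
  rewrite /f /lA index_cat iA' /lC nth_cat.
  have lt : index i (enum A) < size (enum C) by rewrite -cardE -hAC cardE index_mem.
  by rewrite lt -mem_enum mem_nth.
have fB : f @: B \subset D.
  apply/subsetP => _ /imsetP [i iB ->].
  have iA' : i \notin enum A by rewrite mem_enum (disjointFl dAB iB).
  have iB' : i \in enum B by rewrite mem_enum.
  rewrite /f /lA index_cat (negbTE iA') index_cat iB' /lC nth_cat.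
  have lt : index i (enum B) < size (enum D) by rewrite -cardE -hBD cardE index_mem.
  rewrite -!cardE hAC ltnNge leq_addr /= addKn nth_cat -cardE -hBD cardE.
  by rewrite index_mem iB' -mem_enum mem_nth // -cardE -hBD cardE index_mem.
exists f; split => //; apply/eqP; rewrite eqEcard ?fA ?fB card_imset // ?hAC ?hBD leqnn //.
Qed.

End Bij.

Lemma exists_sub (T : finType) (D : {set T}) m : m <= #|D| -> exists A : {set T}, A \subset D /\ #|A| = m.
Proof.
elim: m => [|m IH] h; first by exists set0; rewrite sub0set cards0.
have [A [sAD cA]] := IH (ltnW h).
have : 0 < #|D :\: A| by rewrite cardsD (setIidPr sAD); lia.
rewrite card_gt0 => /set0Pn [a]; rewrite inE => /andP [aA aD].
exists (a |: A); split; first by rewrite subUset sub1set aD sAD.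
by rewrite cardsU1 aA cA.
Qed.

Section Kn.
Variables n k : nat.
Local Notation V := (kneser_vertex n k).
Local Notation e := (@kneser_adj n k).

Lemma ksym : symmetric e.
Proof. by move=> x y; rewrite /kneser_adj disjoint_sym. Qed.

Lemma kval (x : V) : #|val x| = k.
Proof. exact: (eqP (valP x)). Qed.

Lemma kirr : 0 < k -> irreflexive e.
Proof.
move=> k0 x; rewrite /kneser_adj -setI_eq0 setIid; apply/negP => /eqP h.
by move: (kval x); rewrite h cards0; lia.
Qed.

Definition mkV (A : {set 'I_n}) (h : #|A| == k) : V := exist _ A h.

Definition kmap (f : 'I_n -> 'I_n) (fi : injective f) (A : V) : V.
Proof. exists (f @: val A); by rewrite card_imset // (valP A). Defined.

Lemma kmap_val f fi A : val (@kmap f fi A) = f @: val A.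
Proof. by []. Qed.

Lemma kmap_inj f fi : injective (@kmap f fi).
Proof. move=> a b h; apply: val_inj; apply: (imset_inj fi); by rewrite -!kmap_val h. Qed.

Lemma kmap_hom f fi a b : e (@kmap f fi a) (@kmap f fi b) = e a b.
Proof.
rewrite /kneser_adj !kmap_val -!setI_eq0 -imsetI ?imset_eq0 //.
by move=> ? ? _ _; apply: fi.
Qed.

Lemma karc : forall x y u z, e x y -> e u z -> exists phi : V -> V,
      [/\ injective phi, (forall a b, e (phi a) (phi b) = e a b), phi x = u & phi y = z].
Proof.
move=> x y u z exy euz.
have [f [fi fx fy]] := bij3 (etrans (kval x) (esym (kval u))) (etrans (kval y) (esym (kval z))) exy euz.
exists (kmap fi); split.
- exact: kmap_inj.
- exact: kmap_hom.
- by apply: val_inj; rewrite kmap_val fx.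
- by apply: val_inj; rewrite kmap_val fy.
Qed.

Lemma swap_ex (x : V) a b : a \in val x -> b \notin val x ->
  exists w : V, val w = b |: (val x :\ a).
Proof.
move=> ax bx.
have h : #|b |: (val x :\ a)| == k.
  rewrite cardsU1 in_setD1 (negbTE bx) andbF /=.
  have := cardsD1 a (val x); rewrite ax kval add1n => <-; by [].
by exists (mkV h).
Qed.

Lemma kconn : 2 * k + 1 <= n -> forall X : {set V}, cand e X -> bd e X != set0.
Proof.
move=> hn X /andP [nX nT]; apply/negP => /eqP bd0.
have cl : forall x y, x \in X -> e x y -> y \in X.
  move=> x y xX exy; apply/negPn/negP => yX.
  have : y \in bd e X by apply/bdP; split => //; exists x.
  by rewrite bd0 inE.
have step : forall (x w : V) a b, x \in X -> a \in val x -> b \notin val x ->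
    val w = b |: (val x :\ a) -> w \in X.
  move=> x w a b xX ax bx hw.
  have : k <= #|~: (b |: val x)|.
    have := cardsC (b |: val x); rewrite cardsU1 bx kval card_ord; lia.
  case/exists_sub => C0 [sC cC].
  have cCk : #|C0| == k by rewrite cC.
  have exc : e x (mkV cCk).
    rewrite /kneser_adj /= disjoint_sym disjoint_subset.
    apply: subset_trans sC _; apply/subsetP => i; rewrite !inE negb_or; by case/andP.
  have ecw : e (mkV cCk) w.
    rewrite /kneser_adj hw /= disjoint_subset.
    apply: subset_trans sC _; apply/subsetP => i; rewrite !inE !negb_or => /andP [h1 h2].
    by rewrite h1 (negbTE h2) andbF.
  exact: cl _ _ (cl _ _ xX exc) ecw.
case/set0Pn: nX => x0 x0X.
have all : forall m (x y : V), x \in X -> #|val y :\: val x| = m -> y \in X.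
  elim => [|m IH] x y xX hm.
    have sub : val y \subset val x by rewrite -setD_eq0 -cards_eq0 hm.
    have : val y = val x by apply/eqP; rewrite eqEcard sub !kval leqnn.
    by move/val_inj => ->.
  have : 0 < #|val y :\: val x| by rewrite hm.
  rewrite card_gt0 => /set0Pn [b]; rewrite inE => /andP [bx byy].
  have : 0 < #|val x :\: val y|.
    rewrite cardsD kval; have := cardsD (val y) (val x); rewrite hm kval setIC; lia.
  rewrite card_gt0 => /set0Pn [a]; rewrite inE => /andP [ay ax].
  have [w hw] := swap_ex ax bx.
  have wX := step _ _ _ _ xX ax bx hw.
  apply: (IH w) => //.
  have -> : val y :\: val w = (val y :\: val x) :\ b.
    rewrite hw; apply/setP => i; rewrite !inE.
    case: (boolP (i \in val y)) => iy; rewrite ?andbF //.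
    have ia : (i == a) = false by apply: contraNF ay => /eqP <-.
    by rewrite ia /=; case: (i == b); case: (i \in val x).
  have := cardsD1 b (val y :\: val x); rewrite hm inE byy bx /=; lia.
case/negP: nT; apply/eqP/setP => y; rewrite in_setT; apply: (subsetP (sub_ncl e X)).
exact: all _ x0 y x0X erefl.
Qed.

Lemma set1_le1 (A : {set 'I_n}) i : #|A| <= 1 -> i \in A -> A = [set i].
Proof. by move=> h iA; apply/eqP; rewrite eq_sym eqEcard sub1set iA cards1. Qed.

Lemma kcand1 : 2 * k + 1 <= n -> 1 < k -> forall u : V, cand e [set u].
Proof.
move=> hn k2 u; rewrite /cand; apply/andP; split.
  by apply/set0Pn; exists u; rewrite inE.
have : 0 < #|val u| by rewrite kval; lia.
rewrite card_gt0 => /set0Pn [a au].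
have : 0 < #|~: val u| by have := cardsC (val u); rewrite kval card_ord; lia.
rewrite card_gt0 => /set0Pn [b]; rewrite inE => bu.
have [w hw] := swap_ex au bu.
have : 0 < #|val u :\ a| by have := cardsD1 a (val u); rewrite au kval; lia.
rewrite card_gt0 => /set0Pn [a' a'u].
apply/negP => /eqP full.
have : w \in ncl e [set u] by rewrite full inE.
case/nclP => [|[x]]; rewrite inE.
  move/eqP => wu; move: bu; rewrite -wu hw !inE eqxx //.
move/eqP => -> euw.
have a'w : a' \in val w by rewrite hw inE a'u orbT.
by move: euw; rewrite /kneser_adj => /disjointFr /(_ (subsetP (subD1set _ _) _ a'u)); rewrite a'w.
Qed.

Lemma kdeg3 : 2 * k + 1 <= n -> 1 < k -> forall x : V, 2 < #|N e x|.
Proof.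
move=> hn k2 x.
have : k.+1 <= #|~: val x| by have := cardsC (val x); rewrite kval card_ord; lia.
case/exists_sub => D [sD cD].
have sub : [set D :\ a | a in D] \subset [set val y | y in N e x].
  apply/subsetP => _ /imsetP [a aD ->].
  have hk : #|D :\ a| == k by have := cardsD1 a D; rewrite aD cD add1n => -[<-].
  apply/imsetP; exists (mkV hk) => //.
  rewrite inE /kneser_adj /= disjoint_sym disjoint_subset.
  apply/subsetP => i iD; have := subsetP sD i (subsetP (subD1set D a) i iD); by rewrite !inE.
have e1 : #|[set val y | y in N e x]| = #|N e x| by apply: card_imset; exact: val_inj.
have e2 : #|[set D :\ a | a in D]| = #|D|.
  apply: card_in_imset => a b aD bD /setP h; apply/eqP; apply/negP => /negP ab.
  by have := h a; rewrite !inE eqxx aD ab.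
have := subset_leq_card sub; rewrite e1 e2 cD; lia.
Qed.

Lemma knocut : k <= 1 -> forall S : {set V}, ~~ vertex_cut e S.
Proof.
move=> k1 S; apply/negP => /card_gt1P [C1 [C2 [c1 c2]]].
case/(compsP e): c1 => x xS ->; case/(compsP e): c2 => y yS ->.
case: (eqVneq x y) => [->|nxy]; first by rewrite eqxx.
have exy : e x y.
  rewrite /kneser_adj; apply/pred0P => i /=; apply/negP => /andP [ix iy].
  have kx : #|val x| <= 1 by rewrite kval.
  have ky : #|val y| <= 1 by rewrite kval.
  move: nxy; rewrite -(inj_eq val_inj) (set1_le1 kx ix) (set1_le1 ky iy) eqxx //.
have yc := comp_closed (comp_mem e xS) yS exy.
by rewrite (comp_eq ksym yc) eqxx.
Qed.

End Kn.

Import Order.TTheory GRing.Theory Num.Theory.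

Lemma ratle (a b a' b' : nat) : (0 < b)%N -> (0 < b')%N ->
  ((a%:R / b%:R : rat) <= a'%:R / b'%:R)%R -> (a * b' <= a' * b)%N.
Proof.
move=> b0 b'0; rewrite ler_pdivrMr ?ltr0n // mulrAC ler_pdivlMr ?ltr0n //.
by rewrite -!natrM ler_nat.
Qed.

Lemma connect_restr (T : finType) (e1 e2 : rel T) (P : pred T) x y :
  (forall a b, P a -> e1 a b -> P b /\ e2 a b) -> P x -> connect e1 x y -> connect e2 x y.
Proof.
move=> h Px /connectP [p pth ->]; elim: p x Px pth => [|z p IH] x Px /=; first by rewrite connect0.
case/andP => e1xz pth; have [Pz e2xz] := h _ _ Px e1xz.
exact: connect_trans (connect1 e2xz) (IH z Pz pth).
Qed.

Lemma arith (s c c' F P d S1 S2 : nat) : 2 < d -> 1 < c -> c - 1 + F <= c' -> 1 < F -> P <= F ->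
  s * c' <= s.+1 * c -> d * c <= S1 -> S1 <= s * d -> d * c' <= P + S2 -> S2 <= s * d ->
  d * c' <= s.+1 * d -> False.
Proof.
move=> d3 c1 h1 F1 PF r t1 t2 t3 t4 t5.
have cc : c.+1 <= c' by lia.
have sc : s <= c.
  have : s * c.+1 <= s.+1 * c by apply: leq_trans r; rewrite leq_mul2l cc orbT.
  nia.
have cs : c <= s.
  have : d * c <= d * s by rewrite [d * s]mulnC; lia.
  rewrite leq_pmul2l //; lia.
have e2 : c = s by lia.
have ec : c' <= c.+1.
  have : d * c' <= d * c.+1 by rewrite e2 [d * s.+1]mulnC.
  rewrite leq_pmul2l //; lia.
have eq1 : c' = c.+1 by lia.
have eq2 : s = c by lia.
subst.
have : d <= P by nia.
lia.
Qed.

Theorem main_gen (T : finType) (e : rel T) (esym : symmetric e) (d : nat)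
  (hN : forall u, #|N e u| <= d) (hd : forall X, cand e X -> d <= #|bd e X|) (d3 : 2 < d)
  (S : {set T}) : attains_toughness e S ->
  forall C, C \in components e S -> #|C| = 1 \/ #|C| = 2 \/ biconnected e C.
Proof.
move=> [cutS opt] C cC.
have C0 : 0 < #|C| by rewrite card_gt0; exact: comps_n0 cC.
case: (ltnP 2 #|C|) => hC; last by lia.
right; right; split => // v vC x y xC yC.
case: (boolP (connect _ x y)) => // nxy; exfalso.
have vS : v \notin S := comps_sub cC vC.
set S' := v |: S.
have sSS' : S \subset S' by apply: subsetUr.
have nS' z : (z \notin S') = (z != v) && (z \notin S) by rewrite !inE negb_or.
have xC' : x \in C by move: xC; rewrite inE => /andP [].
have yC' : y \in C by move: yC; rewrite inE => /andP [].
have xv : x != v by move: xC; rewrite in_setD1 => /andP [->].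
have yv : y != v by move: yC; rewrite in_setD1 => /andP [->].
have xS' : x \notin S' by rewrite nS' xv (comps_sub cC xC').
have yS' : y \notin S' by rewrite nS' yv (comps_sub cC yC').
have F1 : components e S :\ C \subset components e S'.
  apply/subsetP => D; rewrite in_setD1 => /andP [nDC cD].
  case/compsP: (cD) => r rS Dr.
  have vD : v \notin D.
    apply: contra nDC => vD; apply/eqP; exact: (@comps_disj T e esym S D C v cD cC vD vC).
  have rD : r \in D by rewrite Dr; exact: comp_mem.
  have rS' : r \notin S' by rewrite nS' rS andbT; apply: (contraNneq _ vD) => <-.
  apply/compsP; exists r => //.
  apply/eqP; rewrite eqEsubset; apply/andP; split; last by rewrite Dr; apply: comp_mono.
  apply/subsetP => z zD; have zS := comps_sub cD zD.
  have zS' : z \notin S' by rewrite nS' zS andbT; apply: (contraNneq _ vD) => <-.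
  rewrite inE in_setC zS' /=.
  have zc : z \in comp e S r by rewrite -Dr.
  have := comp_conn zc.
  apply: (@connect_restr _ _ _ (fun a => a \in D) _ _ _ rD) => a b aD.
  rewrite /induced_rel !in_setC => /and3P [aS bS eab].
  have bD := comps_closed cD aD bS eab.
  split => //; rewrite eab andbT !nS' aS bS !andbT.
  by apply/andP; split; apply: (contraNneq _ vD) => <-.
set fin := [set C' in components e S' | C' \subset C].
have F2 : [disjoint components e S :\ C & fin].
  rewrite -setI_eq0; apply/eqP/setP => D; rewrite in_setI in_setD1 in_set in_set0.
  apply/negP => /and3P [/andP [nDC cD] cD' sDC].
  case/set0Pn: (comps_n0 cD) => z zD.
  by move: nDC; rewrite (comps_disj esym cD cC zD (subsetP sDC z zD)) eqxx.
have F3 : ncomp e S - 1 + #|fin| <= ncomp e S'.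
  have sub : (components e S :\ C) :|: fin \subset components e S'.
    rewrite subUset F1 /=; apply/subsetP => D; rewrite inE => /andP [].
    by [].
  have := subset_leq_card sub; rewrite cardsU.
  move: F2; rewrite -setI_eq0 => /eqP ->; rewrite cards0 subn0.
  by rewrite /ncomp (cardsD1 C (components e S)) cC add1n subn1 succnK.
have compin z : z \in C -> z \notin S' -> comp e S' z \in fin.
  move=> zC zS'; rewrite inE; apply/andP; split.
    by apply/compsP; exists z.
  by rewrite (comps_eq esym cC zC); apply: comp_mono.
have F4 : 1 < #|fin|.
  apply/card_gt1P; exists (comp e S' x), (comp e S' y); split; try by apply: compin.
  apply/negP => /eqP exy.
  have : y \in comp e S' x by rewrite exy; apply: comp_mem.
  move/comp_conn; apply/negP; move: nxy; apply: contra.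
  apply: (@connect_restr _ _ _ (fun a => a \in C :\ v) _ _ _ xC) => a b aCv.
  rewrite /induced_rel !in_setC => /and3P [aS' bS' eab].
  have bC : b \in C.
    apply: comps_closed cC _ _ eab; first by move: aCv; rewrite in_setD1 => /andP [].
    by move: bS'; rewrite nS' => /andP [].
  have bCv : b \in C :\ v.
    by rewrite in_setD1 bC andbT; move: bS'; rewrite nS' => /andP [].
  by split => //; rewrite aCv bCv eab.
have F5 : p e S' v <= #|fin|.
  apply: subset_leq_card; apply/subsetP => D; rewrite inE => /andP [cD /bdP [vD [w wD ewv]]].
  have wS' := comps_sub cD wD.
  have wC : w \in C.
    apply: comps_closed cC vC _ _; first by move: wS'; rewrite nS' => /andP [].
    by rewrite esym.
  by rewrite (comps_eq esym cD wD); apply: compin.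
set s := #|S|; set c := ncomp e S; set c' := ncomp e S'.
have cut' : 1 < c'.
  apply: leq_trans F3; rewrite -/c; move: cutS F4; rewrite /vertex_cut -/c; clear; lia.
have vcS' : vertex_cut e S' by [].
have hr := opt S' vcS'.
have sS' : #|S'| = s.+1 by rewrite cardsU1 vS.
rewrite sS' in hr.
have r1 := ratle (ltnW cutS) (ltnW cut') hr.
have t1 := T1 esym hd cutS; have t2 := T2 esym S hN.
have t1' := T1 esym hd cut'; have t2' := T2 esym S' hN.
rewrite sS' in t2'.
have t3 : \sum_(u in S) p e S' u <= s * d.
  rewrite -sum_nat_const; apply: leq_sum => u _; apply: leq_trans (p_le esym _ _) (hN u).
have spl : \sum_(u in S') p e S' u = p e S' v + \sum_(u in S) p e S' u by rewrite big_setU1.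
have t1'' := t1'; rewrite spl in t1''.
exact: (arith d3 cutS F3 F4 F5 r1 t1 t2 t1'' t3 (leq_trans t1' t2')).
Qed.

Theorem lemma2p14 (n k : nat) (hn : 2 * k + 1 <= n)
  (S : {set kneser_vertex n k}) :
  attains_toughness (@kneser_adj n k) S ->
  forall C, C \in components (@kneser_adj n k) S ->
    #|C| = 1 \/ #|C| = 2 \/ biconnected (@kneser_adj n k) C.
Proof.
move=> hat C cC.
case: (leqP k 1) => hk.
  by case: hat => cut _; move: (knocut hk S); rewrite cut.
have k0 : 0 < k by lia.
have : k <= #|[set: 'I_n]| by rewrite cardsT card_ord; lia.
case/exists_sub => A0 [_ cA0].
have hA0 : #|A0| == k by rewrite cA0.
set x0 := mkV hA0.
have kap := kappa (@ksym n k) (kirr k0) (@karc n k) (kconn hn).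
apply: (main_gen (@ksym n k) (d := #|N (@kneser_adj n k) x0|)) => //.
- move=> u; have := kap [set x0] u (kcand1 hn hk x0); rewrite bd1 //; exact: kirr.
- move=> X cX; exact: kap X x0 cX.
- exact: kdeg3.
- exact: hat.
- exact: cC.
Qed.
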